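(* Fix $k\ge2$ and let $Z^{(1)},\dots,Z^{(k)}$ be independent copies of $Z$. Assume $\mathbb{E}\min_{1\le i\le k}Z^{(i)}=\infty$. Then, in the $k$-choice model, with probability one, $\liminf_{n\to\infty}\Lambda_n<\infty$.
   Context: Let $Z$ be a random variable on $\mathbb{N}=\{1,2,3,\dots\}$. Fix $k\ge2$ and let $(Z^{(1)}_n)_{n\ge1},\dots,(Z^{(k)}_n)_{n\ge1}$ be $k$ independent sequences of i.i.d. random variables, all distributed as $Z$ and mutually independent. The $k$-choice model: define $T_n=\{n\}$ for $n\le0$ and $T_n=\{n\}\cup\bigcup_{i=1}^k T_{n-Z^{(i)}_n}$ for $n\ge1$. Let $\mathcal{L}_n=T_n\cap\{0,-1,-2,\dots\}$ and $\Lambda_n=|\mathcal{L}_n|$. *)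

(* Defs.v *)
From HB Require Import structures.
From mathcomp Require Import all_boot all_order all_algebra.
From mathcomp Require Import all_classical all_reals all_analysis.
Set Implicit Arguments. Unset Strict Implicit. Unset Printing Implicit Defensive.
Import Order.TTheory GRing.Theory Num.Theory.
Local Open Scope classical_set_scope.
Local Open Scope ring_scope.

(* The k-choice random tree.  [z i n] is the value Z^{(i)}_n (only n >= 1 is used).
   T_n = {n} for n <= 0, T_n = {n} \cup \bigcup_i T_{n - z i n} for n >= 1.
   Computed with fuel; fuel |n|+1 is sufficient whenever all z i n >= 1. *)
Fixpoint kTree_fuel (k : nat) (z : 'I_k -> nat -> nat) (fuel : nat) (n : int)
  : seq int :=
  match fuel with
  | 0%N => [:: n]
  | f.+1 =>
      if n <= 0 then [:: n]
      else n :: flatten [seq kTree_fuel z f (n - (z i `|n|%N)%:Z) | i <- enum 'I_k]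
  end.

(* T_n as a (duplicate-carrying) list of its elements. *)
Definition kTree (k : nat) (z : 'I_k -> nat -> nat) (n : int) : seq int :=
  kTree_fuel z (`|n|%N).+1 n.

Definition Lambda (k : nat) (z : 'I_k -> nat -> nat) (n : nat) : nat :=
  size (undup [seq x <- kTree z n%:Z | x <= 0]).

(* minimum of f over 'I_k (the neutral element \max_i f i is harmless) *)
Definition kmin (k : nat) (f : 'I_k -> nat) : nat :=
  (\big[minn/(\max_(i < k) f i)%N]_(i < k) f i)%N.

Definition iid_family d (T : measurableType d) (R : realType)
  (P : probability T R) (k : nat) (Zs : 'I_k -> nat -> T -> nat) : Prop :=
  [/\ (forall i n (B : set nat), measurable (Zs i n @^-1` B)),
      (forall i j n m (B : set nat), (0 < n)%N -> (0 < m)%N ->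
          P (Zs i n @^-1` B) = P (Zs j m @^-1` B)) &
      (forall (J : seq ('I_k * nat)) (B : 'I_k * nat -> set nat),
          uniq J -> all (fun p => (0 < p.2)%N) J ->
          fine (P (\bigcap_(p in [set p | p \in J]) (Zs p.1 p.2 @^-1` B p)))
          = \prod_(p <- J) fine (P (Zs p.1 p.2 @^-1` B p)))].

(* Main.v *)
Require Import Defs.
From HB Require Import structures.
From mathcomp Require Import all_boot all_order all_algebra.
From mathcomp Require Import all_classical all_reals all_analysis.
From mathcomp Require Import lra zify measurable_realfun.
Import Order.TTheory GRing.Theory Num.Theory.
Local Open Scope classical_set_scope.
Local Open Scope ring_scope.
Lemma lambda_small k (z : 'I_k -> nat -> nat) (n : nat) :
  (0 < n)%N -> (forall i, n <= z i n)%N -> (Lambda z n <= k)%N.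
Proof.
case: n => [//|n] _ Hz.
rewrite /Lambda /kTree /=.
set F := flatten _.
have -> : F = [seq (n.+1%:Z - (z i n.+1)%:Z) | i <- enum 'I_k].
  rewrite /F; under eq_map => i do rewrite subr_le0 lez_nat Hz.
  by elim: (enum 'I_k) => [//|i s IH] /=; rewrite IH.
apply: (leq_trans (size_undup _)).
rewrite size_filter; apply: (leq_trans (count_size _ _)).
by rewrite size_map size_enum_ord.
Qed.

Definition inter {I T : Type} (F : I -> set T) (s : seq I) : set T :=
  foldr (fun i acc => F i `&` acc) setT s.

Lemma interP (I : eqType) T (F : I -> set T) s w :
  inter F s w <-> (forall i, i \in s -> F i w).
Proof.
elim: s => [|a s IH] /=; first by split.
split.
  move=> [Fa /IH H] i; rewrite in_cons => /orP [/eqP -> //|]; exact: H.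
move=> H; split; first by apply: H; rewrite mem_head.
by apply/IH => i ins; apply: H; rewrite in_cons ins orbT.
Qed.

Lemma inter_measurable d (T : measurableType d) I (F : I -> set T) s :
  (forall i, measurable (F i)) -> measurable (inter F s).
Proof. by move=> mF; elim: s => [|a s IH] //=; exact: measurableI. Qed.

Lemma iid_prod d (T : measurableType d) (R : realType) (P : probability T R)
  k (Zs : 'I_k -> nat -> T -> nat) (J : seq ('I_k * nat)) (B : 'I_k * nat -> set nat) :
  iid_family P Zs -> uniq J -> all (fun p => (0 < p.2)%N) J ->
  fine (P (inter (fun p => Zs p.1 p.2 @^-1` B p) J))
  = \prod_(p <- J) fine (P (Zs p.1 p.2 @^-1` B p)).
Proof.
case=> _ _ H3 uJ pJ; rewrite -H3 //; congr (fine (P _)).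
apply/seteqP; split => w /=.
  by move/interP => H p /= pJ'; apply: H.
by move=> H; apply/interP => p pJ'; apply: H.
Qed.

Definition Gset {T : Type} {k : nat} (Zs : 'I_k -> nat -> T -> nat) (p : 'I_k * nat) : set T :=
  Zs p.1 p.2 @^-1` [set m | (p.2 <= m)%N].

Definition Aset {T : Type} {k : nat} (Zs : 'I_k -> nat -> T -> nat) (n : nat) : set T :=
  inter (Gset Zs) [seq (i, n) | i <- enum 'I_k].

Lemma AsetP {T : Type} {k : nat} (Zs : 'I_k -> nat -> T -> nat) n w :
  Aset Zs n w <-> forall i, (n <= Zs i n w)%N.
Proof.
rewrite /Aset interP; split.
  by move=> H i; apply: (H (i, n)); apply/mapP; exists i; rewrite ?mem_enum.
by move=> H p /mapP [i _ ->]; apply: H.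
Qed.

Lemma Aset_measurable d (T : measurableType d) (R : realType) (P : probability T R)
  k (Zs : 'I_k -> nat -> T -> nat) n :
  iid_family P Zs -> measurable (Aset Zs n).
Proof. by case=> H1 _ _; apply: inter_measurable => p; apply: H1. Qed.

Lemma A_prod d (T : measurableType d) (R : realType) (P : probability T R)
  k (Zs : 'I_k -> nat -> T -> nat) (S : seq nat) :
  iid_family P Zs -> uniq S -> all (fun n => (0 < n)%N) S ->
  fine (P (inter (Aset Zs) S)) = \prod_(n <- S) fine (P (Aset Zs n)).
Proof.
move=> iid uS pS.
have -> : inter (Aset Zs) S = inter (Gset Zs) [seq (i, n) | n <- S, i <- enum 'I_k].
  apply/seteqP; split => w.
    move/interP => H; apply/interP => p /allpairsP [[n i] /= [nS iE ->]].
    by have /AsetP := H n nS; apply.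
  move/interP => H; apply/interP => n nS; apply/AsetP => i.
  by apply: (H (i, n)); apply/allpairsP; exists (n, i); rewrite mem_enum.
rewrite (@iid_prod _ _ _ _ _ _ _ _ iid).
- rewrite big_allpairs_dep; apply: eq_big_seq => n nS.
  rewrite /Aset (@iid_prod _ _ _ _ _ _ _ _ iid) ?big_map //.
  + by rewrite map_inj_uniq ?enum_uniq // => i j [].
  + apply/allP => p /mapP [i _ ->] /=.
    by move: pS => /allP; apply.
- apply: allpairs_uniq => //; first exact: enum_uniq.
  by move=> [a b] [c e] _ _ /= [-> ->].
- apply/allP => p /allpairsP [[n i] /= [nS iE ->]] /=.
  by move/allP: pS; apply.
Qed.

Lemma mix d (T : measurableType d) (R : realType) (P : probability T R)
  k (Zs : 'I_k -> nat -> T -> nat) (L S : seq nat) :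
  iid_family P Zs -> uniq (S ++ L) -> all (fun n => (0 < n)%N) (S ++ L) ->
  fine (P (inter (Aset Zs) S `&` inter (fun n => ~` Aset Zs n) L))
  = \prod_(n <- S) fine (P (Aset Zs n)) * \prod_(n <- L) (1 - fine (P (Aset Zs n))).
Proof.
move=> iid; elim: L S => [|a L IH] S.
  rewrite cats0 /= setIT big_nil mulr1 => uS pS.
  exact: A_prod.
move=> uS pS.
have pe : perm_eq (S ++ a :: L) ((a :: S) ++ L) by rewrite (perm_catCA S [:: a] L).
have uS' : uniq ((a :: S) ++ L) by rewrite -(perm_uniq pe).
have pS' : all (fun n => (0 < n)%N) ((a :: S) ++ L) by rewrite -(perm_all _ pe).
have uSL : uniq (S ++ L) by move: uS' => /andP [].
have pSL : all (fun n => (0 < n)%N) (S ++ L) by move: pS' => /andP [].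
have mA : forall n, measurable (Aset Zs n) by move=> n; exact: Aset_measurable iid.
have mX : measurable (inter (Aset Zs) S `&` inter (fun n => ~` Aset Zs n) L).
  by apply: measurableI; apply: inter_measurable => // n; apply: measurableC.
have -> : inter (Aset Zs) S `&` inter (fun n => ~` Aset Zs n) (a :: L)
   = (inter (Aset Zs) S `&` inter (fun n => ~` Aset Zs n) L) `\` Aset Zs a.
  by apply/seteqP; split => w /=; tauto.
rewrite measureD //; last by rewrite ltey_eq fin_num_measure.
have -> : (inter (Aset Zs) S `&` inter (fun n => ~` Aset Zs n) L) `&` Aset Zs a
   = inter (Aset Zs) (a :: S) `&` inter (fun n => ~` Aset Zs n) L.
  by apply/seteqP; split => w /=; tauto.
rewrite fineB; last 2 first.
- exact: fin_num_measure.
- apply: fin_num_measure; apply: measurableI; apply: inter_measurable => // n.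
  exact: measurableC.
rewrite (IH S uSL pSL) (IH (a :: S) uS' pS') !big_cons.
set x := \prod_(n <- S) _; set y := \prod_(n <- L) _.
rewrite mulrBl mul1r.
by rewrite mulrBr [_ * x]mulrC !mulrA.

Qed.
Lemma prod_bound (R : realType) (L : seq nat) (p : nat -> R) :
  (forall n, 0 <= p n <= 1) ->
  [/\ 0 <= \prod_(n <- L) (1 - p n), \prod_(n <- L) (1 - p n) <= 1 &
      \prod_(n <- L) (1 - p n) * (1 + \sum_(n <- L) p n) <= 1].
Proof.
move=> hp; elim: L => [|a L [h1 h2 h3]]; first by rewrite !big_nil addr0 mulr1.
rewrite !big_cons; set Q := \prod_(n <- L) _ in h1 h2 h3 *.
set S := \sum_(n <- L) _ in h3 *.
have /andP [pa0 pa1] := hp a.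
have hS : 0 <= S by apply: sumr_ge0 => n _; case/andP: (hp n).
split; first by apply: mulr_ge0 => //; lra.
  by rewrite -[1]mul1r; apply: ler_pM => //; lra.
nra.
Qed.
Lemma bigmin_geP (I : eqType) (s : seq I) (f : I -> nat) x0 n :
  (n <= \big[minn/x0]_(i <- s) f i)%N <-> (n <= x0)%N /\ (forall i, i \in s -> (n <= f i)%N).
Proof.
elim: s => [|a s IH]; first by rewrite big_nil; split=> [//|[]].
rewrite big_cons leq_min; split.
  move=> /andP [ha /IH [h0 hs]]; split => // i; rewrite in_cons => /orP [/eqP -> //|]; exact: hs.
move=> [h0 hs]; apply/andP; split; first by apply: hs; rewrite mem_head.
by apply/IH; split => // i hi; apply: hs; rewrite in_cons hi orbT.
Qed.

Lemma kminP k (f : 'I_k -> nat) n : (0 < k)%N ->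
  (n <= kmin f)%N <-> (forall i, (n <= f i)%N).
Proof.
move=> k0; rewrite /kmin bigmin_geP; split.
  move=> [_ H] i; apply: H.
  exact: mem_index_enum.
move=> H; split; last by move=> i _.
have i0 : 'I_k := Ordinal k0.
apply: (leq_trans (H i0)); exact: leq_bigmax.
Qed.

Definition minZ {T : Type} {k : nat} (Zs : 'I_k -> nat -> T -> nat) (w : T) : nat :=
  kmin (fun i => Zs i 1%N w).

Definition Mset {T : Type} {k : nat} (Zs : 'I_k -> nat -> T -> nat) (m : nat) : set T :=
  [set w | (m <= minZ Zs w)%N].

Lemma Mset_eq {T : Type} {k : nat} (Zs : 'I_k -> nat -> T -> nat) m : (0 < k)%N ->
  Mset Zs m = inter (fun p => Zs p.1 p.2 @^-1` [set x | (m <= x)%N])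
                    [seq (i, 1%N) | i <- enum 'I_k].
Proof.
move=> k0; apply/seteqP; split => w.
  move=> /= /(kminP _ _ _ k0) H; apply/interP => p /mapP [i _ ->]; exact: H.
move/interP => H; rewrite /Mset /= /minZ; apply/(kminP _ _ _ k0) => i.
by apply: (H (i, 1%N)); apply/mapP; exists i; rewrite ?mem_enum.
Qed.

Lemma Mset_measurable d (T : measurableType d) (R : realType) (P : probability T R)
  k (Zs : 'I_k -> nat -> T -> nat) m :
  (0 < k)%N -> iid_family P Zs -> measurable (Mset Zs m).
Proof.
by move=> k0 [H1 _ _]; rewrite Mset_eq //; apply: inter_measurable => p; apply: H1.
Qed.

Lemma minZ_measurable d (T : measurableType d) (R : realType) (P : probability T R)
  k (Zs : 'I_k -> nat -> T -> nat) (B : set nat) :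
  (0 < k)%N -> iid_family P Zs -> measurable (minZ Zs @^-1` B).
Proof.
move=> k0 iid.
have -> : minZ Zs @^-1` B = \bigcup_(m in B) (Mset Zs m `\` Mset Zs m.+1).
  apply/seteqP; split => w /=.
    move=> Bw; exists (minZ Zs w) => //; rewrite /Mset /=; split => //.
    by rewrite ltnn.
  move=> [m Bm [/= h1 h2]].
  have -> : minZ Zs w = m by apply/eqP; rewrite eqn_leq h1 andbT leqNgt; apply/negP.
  exact: Bm.
apply: bigcup_measurable => m _; apply: measurableD; exact: Mset_measurable iid.
Qed.

Lemma pA_Mset d (T : measurableType d) (R : realType) (P : probability T R)
  k (Zs : 'I_k -> nat -> T -> nat) n :
  (0 < k)%N -> (0 < n)%N -> iid_family P Zs ->
  fine (P (Aset Zs n)) = fine (P (Mset Zs n)).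
Proof.
move=> k0 n0 iid.
rewrite Mset_eq // /Aset !(@iid_prod _ _ _ _ _ _ _ _ iid); first last.
- by apply/allP => p /mapP [i _ ->].
- by rewrite map_inj_uniq ?enum_uniq // => i j [].
- by apply/allP => p /mapP [i _ ->].
- by rewrite map_inj_uniq ?enum_uniq // => i j [].
rewrite !big_map; apply: eq_bigr => i _ /=.
by case: iid => _ H2 _; rewrite (H2 i i n 1%N).
Qed.

Lemma sums_unbounded d (T : measurableType d) (R : realType) (P : probability T R)
  k (Zs : 'I_k -> nat -> T -> nat) :
  (0 < k)%N -> iid_family P Zs ->
  (\int[P]_w ((kmin (fun i => Zs i 1%N w))%:R : R)%:E = +oo)%E ->
  forall C : R, exists M, C < \sum_(n < M) fine (P (Mset Zs n.+1)).
Proof.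
move=> k0 iid Hint C.
apply: contrapT => /forallNP H.
have HC : forall M, \sum_(n < M) fine (P (Mset Zs n.+1)) <= C.
  by move=> M; rewrite leNgt; apply/negP; exact: H.
have mE : forall n, measurable (Mset Zs n) by move=> n; exact: Mset_measurable iid.
pose f : nat -> T -> \bar R := fun n w => ((\1_(Mset Zs n.+1) w : R)%:E)%E.
have mf : forall n, measurable_fun setT (f n).
  by move=> n; apply/measurable_EFinP; apply: measurable_indic.
have f0 : forall n w, (0 <= f n w)%E by move=> n w; rewrite lee_fin.
have : (\int[P]_w ((kmin (fun i => Zs i 1%N w))%:R : R)%:E <= C%:E)%E.
  apply: (@le_trans _ _ (\int[P]_w (\sum_(n <oo) f n w))%E).
    apply: ge0_le_integral => //.
    - move=> mT Y mY; rewrite setTI.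
      exact: (@minZ_measurable _ _ _ P k Zs (fun m => Y ((m%:R : R)%:E))).
    - exact: (@ge0_emeasurable_sum _ _ _ setT f xpredT).
    - move=> w _.
      apply: le_trans (nneseries_lim_ge (minZ Zs w) _); last by move=> n _ _; exact: f0.
      rewrite big_nat_cond (eq_bigr (fun _ => 1%E)); last first.
        move=> i /andP [/andP [_ hi] _]; rewrite /f indicE mem_set //.
      rewrite -big_nat_cond sumEFin sumr_const_nat subn0 lee_fin.
      by rewrite /minZ.
  rewrite integral_nneseries //.
  rewrite (eq_eseriesr (g := fun n => (fine (P (Mset Zs n.+1)))%:E)); last first.
    move=> n _; rewrite integral_indic // setIT fineK //; exact: fin_num_measure.
  apply: lime_le; first by apply: is_cvg_nneseries => n _ _; rewrite lee_fin fine_ge0.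
  apply: nearW => M; rewrite sumEFin lee_fin big_mkord; exact: HC.
by rewrite Hint leNgt ltey.
Qed.

Definition Cset {T : Type} {k : nat} (Zs : 'I_k -> nat -> T -> nat) (N : nat) : set T :=
  [set w | forall n, (N < n)%N -> ~ Aset Zs n w].

Lemma Cset_null d (T : measurableType d) (R : realType) (P : probability T R)
  k (Zs : 'I_k -> nat -> T -> nat) N :
  (0 < k)%N -> iid_family P Zs ->
  (\int[P]_w ((kmin (fun i => Zs i 1%N w))%:R : R)%:E = +oo)%E ->
  P.-negligible (Cset Zs N).
Proof.
move=> k0 iid Hint.
have mA : forall n, measurable (Aset Zs n) by move=> n; exact: Aset_measurable iid.
have mC : measurable (Cset Zs N).
  have -> : Cset Zs N = \bigcap_(n in [set n | (N < n)%N]) ~` Aset Zs n.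
    by apply/seteqP; split => w /= H n hn; apply: H.
  by apply: bigcap_measurableType => n _; apply: measurableC.
apply/negligibleP => //.
set x := fine (P (Cset Zs N)).
have Px : P (Cset Zs N) = x%:E by rewrite fineK // fin_num_measure.
have x0 : 0 <= x by rewrite /x fine_ge0.
pose q n := fine (P (Mset Zs n)).
have q01 : forall n, 0 <= q n <= 1.
  move=> n; rewrite /q fine_ge0 //=.
  have := probability_le1 P (@Mset_measurable _ _ _ P _ Zs n k0 iid).
  rewrite -[P (Mset Zs n)]fineK ?fin_num_measure //; last exact: Mset_measurable iid.
have hb : forall b, x * (1 + \sum_(N.+1 <= n < b) q n) <= 1.
  move=> b.
  have [h1 h2 h3] := @prod_bound R (index_iota N.+1 b) q q01.
  apply: le_trans h3; apply: ler_wpM2r.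
    by rewrite addr_ge0 // sumr_ge0 // => n _; case/andP: (q01 n).
  have -> : \prod_(n <- index_iota N.+1 b) (1 - q n)
          = \prod_(n <- index_iota N.+1 b) (1 - fine (P (Aset Zs n))).
    rewrite big_seq_cond [in RHS]big_seq_cond; apply: eq_bigr => n.
    rewrite mem_index_iota => /andP [/andP [hn _] _].
    by rewrite /q (@pA_Mset _ _ _ P _ Zs n k0 _ iid) //; apply: leq_trans hn.
  have := @mix _ _ _ P k Zs (index_iota N.+1 b) [::] iid.
  rewrite /= setTI big_nil mul1r => <-; last first.
    by apply/allP => n; rewrite mem_index_iota => /andP [hn _]; apply: leq_trans hn.
    exact: iota_uniq.
  rewrite -lee_fin -Px fineK; last apply: fin_num_measure.
    apply: le_measure; rewrite ?inE //.
    - apply: inter_measurable => n; exact: measurableC.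
    - move=> w /= Cw; apply/interP => n; rewrite mem_index_iota => /andP [hn _].
      exact: Cw.
  apply: inter_measurable => n; exact: measurableC.
suff xz : x = 0 by apply: (eq_trans Px); rewrite xz.
apply/eqP; rewrite eq_le x0 andbT leNgt; apply/negP => xpos.
have [M hM] := @sums_unbounded _ _ _ P _ Zs k0 iid Hint (x^-1 + N%:R).
have := hb (N.+1 + M)%N.
set S := \sum_(N.+1 <= n < N.+1 + M) q n.
have hS : \sum_(n < M) q n.+1 <= N%:R + S.
  rewrite -(big_mkord xpredT (fun n => q n.+1)) -(big_add1 _ _ 0 M.+1 xpredT q).
  have q0 : forall n, 0 <= q n by move=> n; case/andP: (q01 n).
  apply: (@le_trans _ _ (\sum_(1 <= n < N.+1 + M) q n)).
    rewrite [leRHS](big_cat_nat _ (n := M.+1)) //=; try lia.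
    by rewrite lerDl sumr_ge0.
  rewrite (big_cat_nat _ (n := N.+1)) //=; try lia.
  rewrite lerD2r; apply: (@le_trans _ _ (\sum_(1 <= n < N.+1) (1 : R))).
    by apply: ler_sum => n _; case/andP: (q01 n).
  by rewrite sumr_const_nat subn1.
have xinv : x * x^-1 = 1 by rewrite mulfV // gt_eqF.
have hS' : x^-1 < S by move: hM hS; lra.
have : x * x^-1 < x * S by rewrite ltr_pM2l.
nra.
Qed.

Theorem mainTheorem15 (d : measure_display) (T : measurableType d)
  (R : realType) (P : probability T R) (k : nat)
  (Zs : 'I_k -> nat -> T -> nat) :
  (2 <= k)%N ->
  iid_family P Zs ->
  (forall i n w, (0 < n)%N -> (1 <= Zs i n w)%N) ->
  (\int[P]_w ((kmin (fun i => Zs i 1%N w))%:R : R)%:E = +oo)%E ->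
  {ae P, forall w,
     exists M : nat, forall N : nat, exists2 n : nat,
       (N <= n)%N & (Lambda (fun i m => Zs i m w) n <= M)%N}.
Proof.
move=> k2 iid _ Hint.
have k0 : (0 < k)%N by apply: leq_trans k2.
apply: (@negligibleS _ _ _ P (\bigcup_N Cset Zs N)); last first.
  by apply: negligible_bigcup => N; exact: Cset_null.
move=> w /= nQ; apply: contrapT => nC; apply: nQ; exists k => N.
have : ~ Cset Zs N w by move=> h; apply: nC; exists N.
move=> /existsNP [n] /not_implyP [hn /contrapT hA].
exists n; first exact: ltnW.
apply: lambda_small; first by apply: leq_trans hn.
by move=> i; have /AsetP := hA; apply.
Qed.
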